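(* Let $G=(V,E)$ be a graph on $V=\{1,\ldots,n\}$ and $b(\mathbf x)=\sum_{ij\in E}a_{ij}x_ix_j$ with real coefficients. Let $c$ be a real number such that $\sum_{ij\in\gamma(X)}|a_{ij}|\leqslant c\left(\mu^+(X)-\mu^-(X)\right)$ for all $X\subseteq V$. Then $\operatorname{mcgap}[b](\mathbf x)\leqslant c\,\operatorname{chgap}[b](\mathbf x)$ for all $\mathbf x\in[0,1]^n$.
   Context: $B=\{(\mathbf x,z)\in[0,1]^n\times\mathbb R:z=b(\mathbf x)\}$. The McCormick polytopes are $P=\{(\mathbf x,\mathbf y)\in[0,1]^n\times[0,1]^{|E|}: y_{ij}\le x_i,\ y_{ij}\le x_j,\ y_{ij}\ge x_i+x_j-1\ \forall ij\in E\}$ and $Q=\{(\mathbf x,z)\in[0,1]^n\times\mathbb R:\exists\mathbf y\in[0,1]^{|E|}\text{ with }(\mathbf x,\mathbf y)\in P,\ z=\sum_{ij\in E}a_{ij}y_{ij}\}$. $\operatorname{cav}[b](\mathbf x)=\max\{z:(\mathbf x,z)\in\operatorname{conv}(B)\}$, $\operatorname{vex}[b](\mathbf x)=\min\{z:(\mathbf x,z)\in\operatorname{conv}(B)\}$, $\operatorname{mcu}[b](\mathbf x)=\max\{z:(\mathbf x,z)\in Q\}$, $\operatorname{mcl}[b](\mathbf x)=\min\{z:(\mathbf x,z)\in Q\}$, $\operatorname{chgap}[b]=\operatorname{cav}[b]-\operatorname{vex}[b]$, $\operatorname{mcgap}[b]=\operatorname{mcu}[b]-\operatorname{mcl}[b]$.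 For $X\subseteq V$, $\gamma(X)$ is the set of edges with both endpoints in $X$; for disjoint $U_1,U_2$, $\delta(U_1,U_2)$ is the set of edges with one endpoint in each; $\mu^+(X)=\max\{\sum_{ij\in\delta(U_1,U_2)}a_{ij}:U_1\cup U_2=X,\ U_1\cap U_2=\emptyset\}$ and $\mu^-(X)$ is the corresponding minimum. *)

(* Defs.v *)
From HB Require Import structures.
From mathcomp Require Import all_boot all_order all_algebra.
Set Implicit Arguments. Unset Strict Implicit. Unset Printing Implicit Defensive.
Import Order.TTheory GRing.Theory Num.Theory.
Local Open Scope ring_scope.

(* Vertices V = 'I_n ; a graph is an edge set E of pairs (i,j) with i < j
   (hypothesis in the theorem); a : edge -> coefficient a_ij. Points of R^n
   are functions 'I_n -> R. *)

Section Defs.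
Variables (R : realFieldType) (n : nat).
Implicit Types (E : {set 'I_n * 'I_n}) (a : 'I_n * 'I_n -> R) (x : 'I_n -> R).

Definition in_cube x : Prop := forall i, 0 <= x i <= 1.

Definition bilin E a x : R := \sum_(e in E) a e * x e.1 * x e.2.

Definition in_P E x (y : 'I_n * 'I_n -> R) : Prop :=
  in_cube x /\
  forall e, e \in E ->
    [/\ 0 <= y e <= 1, y e <= x e.1, y e <= x e.2 & x e.1 + x e.2 - 1 <= y e].

Definition in_Q E a x (z : R) : Prop :=
  in_cube x /\ exists y, in_P E x y /\ z = \sum_(e in E) a e * y e.

Definition in_B E a x (z : R) : Prop := in_cube x /\ z = bilin E a x.

Definition in_convB E a x (z : R) : Prop :=
  exists (k : nat) (lam : 'I_k -> R) (p : 'I_k -> 'I_n -> R) (w : 'I_k -> R),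
    [/\ forall t, 0 <= lam t,
        \sum_(t < k) lam t = 1,
        forall t, in_B E a (p t) (w t),
        forall i, x i = \sum_(t < k) lam t * p t i
      & z = \sum_(t < k) lam t * w t].

Definition is_max (S : R -> Prop) (z : R) : Prop := S z /\ forall w, S w -> w <= z.
Definition is_min (S : R -> Prop) (z : R) : Prop := S z /\ forall w, S w -> z <= w.

Definition gammaE E (X : {set 'I_n}) : {set 'I_n * 'I_n} :=
  [set e in E | (e.1 \in X) && (e.2 \in X)].
Definition deltaE E (U1 U2 : {set 'I_n}) : {set 'I_n * 'I_n} :=
  [set e in E | ((e.1 \in U1) && (e.2 \in U2)) || ((e.1 \in U2) && (e.2 \in U1))].

Definition cut_weight E a (U1 U2 : {set 'I_n}) : R := \sum_(e in deltaE E U1 U2) a e.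

(* mu^+(X), mu^-(X): max / min over ordered partitions (U1, X \ U1) of X.
   The partition U1 = X, U2 = empty has weight 0, so using 0 as the neutral
   element of the iterated max / min is harmless. *)
Definition mu_plus E a (X : {set 'I_n}) : R :=
  \big[Num.max/0]_(U1 in powerset X) cut_weight E a U1 (X :\: U1).
Definition mu_minus E a (X : {set 'I_n}) : R :=
  \big[Num.min/0]_(U1 in powerset X) cut_weight E a U1 (X :\: U1).

End Defs.

(* Main.v *)
Require Import Defs.
From HB Require Import structures.
From mathcomp Require Import all_boot all_order all_algebra.
From mathcomp Require Import ring lra.
Import Order.TTheory GRing.Theory Num.Theory.
Local Open Scope ring_scope.
Set Implicit Arguments. Unset Strict Implicit.

Lemma split_lsh m k (i : 'I_m) : split (lshift k i) = inl i.
Proof. exact: (unsplitK (inl _ i)). Qed.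
Lemma split_rsh m k (j : 'I_k) : split (rshift m j) = inr j.
Proof. exact: (unsplitK (inr _ j)). Qed.

Lemma convB_one (R : realFieldType) n (E : {set 'I_n * 'I_n}) a (p : 'I_n -> R) :
  in_cube p -> in_convB E a p (bilin E a p).
Proof.
move=> hp; exists 1%N, (fun _ => 1), (fun _ => p), (fun _ => bilin E a p); split.
- by move=> _; rewrite ler01.
- by rewrite big_ord1.
- by move=> _; split.
- by move=> i; rewrite big_ord1 mul1r.
- by rewrite big_ord1 mul1r.
Qed.

Lemma convB_mix (R : realFieldType) n (E : {set 'I_n * 'I_n}) a (t : R)
   x1 z1 x2 z2 x z :
  0 <= t <= 1 -> in_convB E a x1 z1 -> in_convB E a x2 z2 ->
  (forall i, x i = t * x1 i + (1 - t) * x2 i) -> z = t * z1 + (1 - t) * z2 ->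
  in_convB E a x z.
Proof.
move=> /andP[t0 t1] [k1 [l1 [p1 [w1 [l1p l1s pB1 px1 pz1]]]]]
  [k2 [l2 [p2 [w2 [l2p l2s pB2 px2 pz2]]]]] hx hz.
exists (k1 + k2)%N,
  (fun s => match split s with inl i => t * l1 i | inr j => (1 - t) * l2 j end),
  (fun s => match split s with inl i => p1 i | inr j => p2 j end),
  (fun s => match split s with inl i => w1 i | inr j => w2 j end); split.
- move=> s; case: (split s) => [i|j]; apply: mulr_ge0 => //; lra.
- rewrite big_split_ord /=.
  rewrite (eq_bigr (fun i => t * l1 i)); last by move=> i _; rewrite split_lsh.
  rewrite (eq_bigr (fun i => (1 - t) * l2 i)); last by move=> i _; rewrite split_rsh.
  rewrite -!mulr_sumr l1s l2s; ring.
- by move=> s; case: (split s).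
- move=> i; rewrite hx big_split_ord /=.
  rewrite (eq_bigr (fun s => t * (l1 s * p1 s i))); last by move=> s _; rewrite split_lsh mulrA.
  rewrite (eq_bigr (fun s => (1 - t) * (l2 s * p2 s i))); last by move=> s _; rewrite split_rsh mulrA.
  by rewrite -!mulr_sumr -px1 -px2.
- rewrite hz big_split_ord /=.
  rewrite (eq_bigr (fun s => t * (l1 s * w1 s))); last by move=> s _; rewrite split_lsh mulrA.
  rewrite (eq_bigr (fun s => (1 - t) * (l2 s * w2 s))); last by move=> s _; rewrite split_rsh mulrA.
  by rewrite -!mulr_sumr -pz1 -pz2.
Qed.

Definition dd (R : realFieldType) n (x : 'I_n -> R) k := Num.min (x k) (1 - x k).
Definition ww (R : realFieldType) n (x : 'I_n -> R) (e : 'I_n * 'I_n) :=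
  Num.min (dd x e.1) (dd x e.2).
Definition frac (R : realFieldType) n (x : 'I_n -> R) := [set k | (0 < x k) && (x k < 1)].

Lemma minB (R : realFieldType) (u v d : R) : Num.min (u - d) (v - d) = Num.min u v - d.
Proof. by rewrite !minEle lerD2r; case: ifP. Qed.

Lemma minM (R : realFieldType) (t u v : R) : 0 <= t -> t * Num.min u v = Num.min (t*u) (t*v).
Proof.
move=> t0; rewrite !minEle; case: (leP u v) => h; case: (leP (t*u) (t*v)) => h2 //.
- have : t * u <= t * v by apply: ler_wpM2l. lra.
- have : t * v <= t * u by apply: ler_wpM2l => //; apply: ltW. lra.
Qed.

Lemma dd_ge0 (R : realFieldType) n (x : 'I_n -> R) k : in_cube x -> 0 <= dd x k.
Proof. by move=> /(_ k) /andP[h0 h1]; rewrite /dd le_min h0 subr_ge0 h1. Qed.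

Lemma dd_frac0 (R : realFieldType) n (x : 'I_n -> R) k : in_cube x -> k \notin frac x -> dd x k = 0.
Proof.
move=> hc; have /andP[h0 h1] := hc k.
rewrite /dd inE negb_and -!leNgt => /orP[h|h].
- have -> : x k = 0 by lra. by rewrite subr0 min_l ?ler01.
- have -> : x k = 1 by lra. by rewrite subrr min_r ?ler01.
Qed.

Lemma ww0 (R : realFieldType) n (x : 'I_n -> R) e : in_cube x ->
  dd x e.1 = 0 \/ dd x e.2 = 0 -> ww x e = 0.
Proof.
move=> hc [h|h]; rewrite /ww h; [rewrite min_l // | rewrite min_r //]; exact: dd_ge0.
Qed.

Lemma edge_bound (R : realFieldType) (u v y y' : R) :
  0 <= y -> y <= u -> y <= v -> u + v - 1 <= y ->
  0 <= y' -> y' <= u -> y' <= v -> u + v - 1 <= y' ->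
  `|y - y'| <= Num.min (Num.min u (1 - u)) (Num.min v (1 - v)).
Proof.
move=> *; case: (ler0P (y - y')) => h.
- rewrite !le_min; apply/andP; split; apply/andP; split; lra.
- rewrite !le_min; apply/andP; split; apply/andP; split; lra.
Qed.

Lemma bigmax_att (R : realFieldType) (I : finType) (P : pred I) (F : I -> R) i0 :
  P i0 -> F i0 = 0 -> exists2 i, P i & \big[Num.max/0]_(i | P i) F i = F i.
Proof.
move=> P0 F0; apply: (big_ind (fun v => exists2 i, P i & v = F i)).
- by exists i0.
- move=> u v [i Pi ->] [j Pj ->]; rewrite maxEle; case: ifP => _; [exists j | exists i] => //.
- by move=> i Pi; exists i.
Qed.

Lemma bigmin_att (R : realFieldType) (I : finType) (P : pred I) (F : I -> R) i0 :
  P i0 -> F i0 = 0 -> exists2 i, P i & \big[Num.min/0]_(i | P i) F i = F i.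
Proof.
move=> P0 F0; apply: (big_ind (fun v => exists2 i, P i & v = F i)).
- by exists i0.
- move=> u v [i Pi ->] [j Pj ->]; rewrite minEle; case: ifP => _; [exists i | exists j] => //.
- by move=> i Pi; exists i.
Qed.

Lemma cut_self (R : realFieldType) n (E : {set 'I_n * 'I_n}) (a : _ -> R) X :
  cut_weight E a X (X :\: X) = 0.
Proof. rewrite /cut_weight big1 // => e; rewrite /deltaE setDv !inE; by rewrite !andbF. Qed.

Lemma bigmax_ge (R : realFieldType) (I : finType) (P : pred I) (F : I -> R) i0 :
  P i0 -> F i0 = 0 -> 0 <= \big[Num.max/0]_(i | P i) F i.
Proof.
move=> P0 F0; rewrite unlock.
have : i0 \in index_enum I by rewrite mem_index_enum.
elim: (index_enum _) => //= j r IH; rewrite inE => /orP[/eqP <-|hr].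
- by rewrite P0 le_max F0 lexx.
- by case: ifP => _; rewrite ?le_max IH ?orbT.
Qed.

Lemma bigmin_le (R : realFieldType) (I : finType) (P : pred I) (F : I -> R) i0 :
  P i0 -> F i0 = 0 -> \big[Num.min/0]_(i | P i) F i <= 0.
Proof.
move=> P0 F0; rewrite unlock.
have : i0 \in index_enum I by rewrite mem_index_enum.
elim: (index_enum _) => //= j r IH; rewrite inE => /orP[/eqP <-|hr].
- by rewrite P0 ge_min F0 lexx.
- by case: ifP => _; rewrite ?ge_min IH ?orbT.
Qed.

Lemma mu_plus_ge0 (R : realFieldType) n (E : {set 'I_n * 'I_n}) a X : 0 <= mu_plus E a X :> R.
Proof. apply: (@bigmax_ge _ _ _ _ X); [by rewrite powersetE | exact: cut_self]. Qed.
Lemma mu_minus_le0 (R : realFieldType) n (E : {set 'I_n * 'I_n}) a X : mu_minus E a X <= 0 :> R.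
Proof. apply: (@bigmin_le _ _ _ _ X); [by rewrite powersetE | exact: cut_self]. Qed.

Definition pL (R : realFieldType) n (X U : {set 'I_n}) (x : 'I_n -> R) k : R :=
  if k \in X then (k \in U)%:R else x k.
Definition pR (R : realFieldType) n (X U : {set 'I_n}) (x : 'I_n -> R) k : R :=
  if k \in X then (k \notin U)%:R else x k.
Definition gg (R : realFieldType) n (X : {set 'I_n}) (x : 'I_n -> R) (e : 'I_n * 'I_n) : R :=
  if e.1 \in X then (if e.2 \in X then 1 else x e.2)
  else (if e.2 \in X then x e.1 else 2 * x e.1 * x e.2).

Lemma Kid (R : realFieldType) n (E : {set 'I_n * 'I_n}) (a : _ -> R) (X U : {set 'I_n}) (x : 'I_n -> R) :
  U \subset X ->
  bilin E a (pL X U x) + bilin E a (pR X U x) + cut_weight E a U (X :\: U)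
  = \sum_(e in E) a e * gg X x e.
Proof.
move/subsetP=> hU.
rewrite /cut_weight /deltaE (big_mkcond (fun e => e \in _)) /bilin.
rewrite [Z in _ + _ + Z = _](eq_bigr (fun e => if e \in E then
   (if ((e.1 \in U) && (e.2 \in X :\: U)) || ((e.1 \in X :\: U) && (e.2 \in U)) then a e else 0) else 0)); last first.
  by move=> e _; rewrite inE; case: (e \in E).
rewrite -big_mkcond /= -!big_split /=; apply: eq_bigr => e _.
rewrite /pL /pR /gg !inE.
move: (hU e.1) (hU e.2).
case: (e.1 \in U); case: (e.2 \in U); case: (e.1 \in X); case: (e.2 \in X) => //= h1 h2;
  rewrite ?(h1 isT) ?(h2 isT); try ring.
all: first [by have := h1 isT | by have := h2 isT].
Qed.

Definition xp (R : realFieldType) n (x : 'I_n -> R) (d t : R) k :=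
  if k \in frac x then (x k - d) / t else x k.

Lemma xp_cube (R : realFieldType) n (x : 'I_n -> R) d t :
  in_cube x -> (forall k, k \in frac x -> d <= dd x k) -> t = 1 - 2 * d -> 0 <= t ->
  in_cube (xp x d t).
Proof.
move=> hc hd ht t0 k; rewrite /xp; case: ifP => hk; last exact: hc.
have := hd k hk; rewrite /dd le_min => /andP[h1 h2].
case: (eqVneq t 0) => [->|tn0]; first by rewrite invr0 mulr0 lexx ler01.
have tp : 0 < t by rewrite lt_neqAle eq_sym tn0.
rewrite divr_ge0 ?subr_ge0 //= ler_pdivrMr // mul1r; lra.
Qed.

Lemma ww_step (R : realFieldType) n (x : 'I_n -> R) (d t : R) e :
  in_cube x -> (forall k, k \in frac x -> d <= dd x k) -> 0 < d -> t = 1 - 2 * d -> 0 <= t ->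
  ww x e = d * ((e.1 \in frac x) && (e.2 \in frac x))%:R + t * ww (xp x d t) e.
Proof.
move=> hc hd d0 ht t0.
have hc' := xp_cube hc hd ht t0.
case: (boolP (e.1 \in frac x)) => h1; last first.
  rewrite /= mulr0 add0r (ww0 hc) ?(ww0 hc') ?mulr0 //; left => //.
    by rewrite /dd /xp (negbTE h1) -/(dd x e.1) (dd_frac0 hc).
  exact: dd_frac0.
case: (boolP (e.2 \in frac x)) => h2; last first.
  rewrite /= mulr0 add0r (ww0 hc) ?(ww0 hc') ?mulr0 //; right => //.
    by rewrite /dd /xp (negbTE h2) -/(dd x e.2) (dd_frac0 hc).
  exact: dd_frac0.
rewrite /= mulr1.
have hk : forall k, k \in frac x -> t * dd (xp x d t) k = dd x k - d.
  move=> k hk.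
  case: (eqVneq t 0) => [t00|tn0].
    have := hd k hk; rewrite /dd le_min => /andP[k1 k2].
    rewrite t00 mul0r.
    have -> : x k = 1/2 by lra.
    have -> : 1 - 1/2 = 1/2 :> R by lra.
    rewrite minxx; lra.
  have e1 : t * ((x k - d) / t) = x k - d by rewrite mulrC divfK.
  rewrite /dd /xp hk minM // mulrBr mulr1 e1 -minB; congr Num.min; lra.
rewrite /ww minM // !hk // minB; lra.
Qed.

Definition SS (R : realFieldType) n (E : {set 'I_n * 'I_n}) (a : _ -> R) (x : 'I_n -> R) :=
  \sum_(e in E) `|a e| * ww x e.

Lemma SS_step (R : realFieldType) n (E : {set 'I_n * 'I_n}) (a : _ -> R) (x : 'I_n -> R) (d t : R) :
  in_cube x -> (forall k, k \in frac x -> d <= dd x k) -> 0 < d -> t = 1 - 2 * d -> 0 <= t ->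
  SS E a x = d * \sum_(e in gammaE E (frac x)) `|a e| + t * SS E a (xp x d t).
Proof.
move=> hc hd d0 ht t0.
rewrite /SS big_mkcond [Z in _ = _ * Z + _]big_mkcond [Z in _ = _ + _ * Z]big_mkcond.
rewrite !mulr_sumr -big_split; apply: eq_bigr => e _; rewrite /gammaE inE.
case: (e \in E) => /=; last by rewrite !mulr0 addr0.
rewrite (ww_step e hc hd d0 ht t0).
by case: ((e.1 \in frac x) && (e.2 \in frac x)) => /=; ring.
Qed.

Lemma Q_bound (R : realFieldType) n (E : {set 'I_n * 'I_n}) (a : _ -> R) (x : 'I_n -> R) mcu mcl :
  is_max (in_Q E a x) mcu -> is_min (in_Q E a x) mcl -> mcu - mcl <= SS E a x.
Proof.
case=> [[_ [y [[_ hy] ->]]] _] [[_ [y' [[_ hy'] ->]]] _].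
rewrite -sumrB; apply: ler_sum => e he; rewrite -mulrBr.
apply: le_trans (ler_norm _) _; rewrite normrM; apply: ler_wpM2l => //.
have [/andP[y0 y1] ya yb yc] := hy e he.
have [/andP[y0' y1'] ya' yb' yc'] := hy' e he.
exact: edge_bound.
Qed.

Lemma pL_cube (R : realFieldType) n (X U : {set 'I_n}) (x : 'I_n -> R) :
  in_cube x -> in_cube (pL X U x).
Proof. move=> hc k; rewrite /pL; case: ifP => _; last exact: hc. by case: (k \in U); rewrite /= ?lexx ?ler01. Qed.
Lemma pR_cube (R : realFieldType) n (X U : {set 'I_n}) (x : 'I_n -> R) :
  in_cube x -> in_cube (pR X U x).
Proof. move=> hc k; rewrite /pR; case: ifP => _; last exact: hc. by case: (k \in U); rewrite /= ?lexx ?ler01. Qed.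

Lemma mid_convB (R : realFieldType) n (E : {set 'I_n * 'I_n}) (a : _ -> R) (X U : {set 'I_n}) (x : 'I_n -> R) :
  in_cube x ->
  in_convB E a (fun k => if k \in X then 1/2 else x k)
    (1/2 * bilin E a (pL X U x) + (1 - 1/2) * bilin E a (pR X U x)).
Proof.
move=> hc; apply: (convB_mix (t := 1/2)) (convB_one _ _ (pL_cube X U hc)) (convB_one _ _ (pR_cube X U hc)) _ _ => //.
- apply/andP; split; lra.
- move=> k; rewrite /pL /pR; case: (k \in X); last by ring.
  by case: (k \in U) => /=; lra.
Qed.

Lemma base_case (R : realFieldType) n (E : {set 'I_n * 'I_n}) (a : _ -> R) (c : R) (x : 'I_n -> R) :
  in_cube x -> frac x = set0 ->
  exists z1 z2, [/\ in_convB E a x z1, in_convB E a x z2 & SS E a x <= c * (z1 - z2)].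
Proof.
move=> hc hX; exists (bilin E a x), (bilin E a x); split; try exact: convB_one.
rewrite subrr mulr0 /SS big1 // => e _; rewrite (ww0 hc) ?mulr0 //; left.
by apply: dd_frac0 => //; rewrite hX inE.
Qed.

Lemma main (R : realFieldType) n (E : {set 'I_n * 'I_n}) (a : _ -> R) (c : R) :
  0 <= c ->
  (forall X : {set 'I_n},
      \sum_(e in gammaE E X) `|a e| <= c * (mu_plus E a X - mu_minus E a X)) ->
  forall m (x : 'I_n -> R), (#|frac x| <= m)%N -> in_cube x ->
  exists z1 z2, [/\ in_convB E a x z1, in_convB E a x z2 & SS E a x <= c * (z1 - z2)].
Proof.
move=> c0 hyp m; elim: m => [|m IH] x hm hc.
  apply: base_case => //; apply: cards0_eq; by move: hm; rewrite leqn0 => /eqP.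
case: (set_0Vmem (frac x)) => [X0 | [i1 hi1]]; first exact: base_case.
case: (arg_minP (P := fun i => i \in frac x) (dd x) hi1) => i0 hi0 hmin.
set d := dd x i0.
have hd : forall k, k \in frac x -> d <= dd x k by move=> k hk; exact: hmin.
have [d0 dh] : 0 < d /\ d <= 1/2.
  move: hi0; rewrite inE /d /dd => /andP[p q]; split; first by rewrite lt_min p subr_gt0.
  rewrite minEle; case: ifP => h; lra.
set t := 1 - 2 * d.
have tdef : t = 1 - 2 * d by [].
have t0 : 0 <= t by rewrite /t; lra.
have hc' := xp_cube hc hd (erefl t) t0.
have sub : frac (xp x d t) \subset frac x :\ i0.
  apply/subsetP => k; rewrite [k \in frac (xp _ _ _)]inE /xp.
  case hk: (k \in frac x); last by move=> h; move: hk; rewrite inE h.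
  rewrite !inE => hk'; move: (hk); rewrite inE => ->; rewrite andbT.
  apply/eqP => ek; move: hk'; rewrite ek /d /dd.
  case: (eqVneq t 0) => [->|tn0]; first by rewrite invr0 mulr0 ltxx.
  rewrite minEle; case: ifP => h.
    by rewrite subrr mul0r ltxx.
  have -> : x i0 - (1 - x i0) = t by rewrite /t /d /dd minEle h; ring.
  by rewrite mulfV // ltxx andbF.
have hm' : (#|frac (xp x d t)| <= m)%N.
  have := subset_leq_card sub; move: hm; rewrite (cardsD1 i0 (frac x)) hi0 add1n ltnS.
  move=> h1 h2; exact: leq_trans h2 h1.
have [z1' [z2' [hz1 hz2 hS]]] := IH _ hm' hc'.
have Pfx : frac x \in powerset (frac x) by rewrite powersetE.
have [Up Upin Upeq] := bigmax_att (P := fun U => U \in powerset (frac x))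
   (F := fun U => cut_weight E a U (frac x :\: U)) Pfx (cut_self E a (frac x)).
have [Um Umin Umeq] := bigmin_att (P := fun U => U \in powerset (frac x))
   (F := fun U => cut_weight E a U (frac x :\: U)) Pfx (cut_self E a (frac x)).
have hG := hyp (frac x); rewrite /mu_plus /mu_minus Upeq Umeq in hG.
rewrite powersetE in Upin; rewrite powersetE in Umin.
have Kp := Kid E a x Upin; have Km := Kid E a x Umin.
have hx : forall k, x k = 2 * d * (if k \in frac x then 1/2 else x k) + (1 - 2 * d) * xp x d t k.
  move=> k; rewrite /xp; case: ifP => hk; last by ring.
  case: (eqVneq t 0) => [t00|tn0].
    have := hd k hk; rewrite /dd le_min => /andP[k1 k2].
    rewrite -/t t00 mul0r addr0; lra.
  rewrite -/t [t * _]mulrC divfK //; lra.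
have d01 : 0 <= 2 * d <= 1 by apply/andP; split; lra.
exists (2 * d * (1/2 * bilin E a (pL (frac x) Um x) + (1 - 1/2) * bilin E a (pR (frac x) Um x)) + (1 - 2 * d) * z1'),
       (2 * d * (1/2 * bilin E a (pL (frac x) Up x) + (1 - 1/2) * bilin E a (pR (frac x) Up x)) + (1 - 2 * d) * z2').
split.
- exact: (convB_mix d01 (mid_convB E a (frac x) Um hc) hz1 hx).
- exact: (convB_mix d01 (mid_convB E a (frac x) Up hc) hz2 hx).
rewrite (SS_step E a hc hd d0 (erefl t) t0).
have h1 := ler_wpM2l (ltW d0) hG.
have h2 := ler_wpM2l t0 hS.
rewrite -/t.
set G := \sum_(e in _) _ in h1 *.
set K := \sum_(e in E) a e * gg (frac x) x e in Kp Km.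
set S' := SS E a (xp x d t) in h2 *.
set cp := cut_weight E a Up _ in hG h1 Kp.
set cm := cut_weight E a Um _ in hG h1 Km.
set bLp := bilin E a (pL _ Up x) in Kp *. set bRp := bilin E a (pR _ Up x) in Kp *.
set bLm := bilin E a (pL _ Um x) in Km *. set bRm := bilin E a (pR _ Um x) in Km *.
have -> : c * (2 * d * (1 / 2 * bLm + (1 - 1 / 2) * bRm) + t * z1' -
   (2 * d * (1 / 2 * bLp + (1 - 1 / 2) * bRp) + t * z2'))
   = d * (c * (cp - cm)) + t * (c * (z1' - z2')).
  have eLm : bLm + bRm = K - cm by rewrite -Km; ring.
  have eLp : bLp + bRp = K - cp by rewrite -Kp; ring.
  have -> : 2 * d * (1 / 2 * bLm + (1 - 1 / 2) * bRm) = d * (bLm + bRm) by field.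
  have -> : 2 * d * (1 / 2 * bLp + (1 - 1 / 2) * bRp) = d * (bLp + bRp) by field.
  rewrite eLm eLp; ring.
exact: lerD.
Qed.

Lemma convB_zero (R : realFieldType) n (E : {set 'I_n * 'I_n}) (a : _ -> R) x z :
  (forall e, e \in E -> a e = 0) -> in_convB E a x z -> z = 0.
Proof.
move=> ha [k [l [p [w [_ _ hB _ ->]]]]]; rewrite big1 // => s _.
have [_ ->] := hB s; rewrite /bilin big1 ?mulr0 // => e he; by rewrite ha // !mul0r.
Qed.

Theorem corollary1 (R : realFieldType) (n : nat) (E : {set 'I_n * 'I_n})
    (a : 'I_n * 'I_n -> R) (c : R) :
  (forall e, e \in E -> (e.1 < e.2)%N) ->
  (forall X : {set 'I_n},
      \sum_(e in gammaE E X) `|a e| <= c * (mu_plus E a X - mu_minus E a X)) ->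
  forall x : 'I_n -> R, in_cube x ->
  forall mcu mcl cav vex : R,
    is_max (in_Q E a x) mcu -> is_min (in_Q E a x) mcl ->
    is_max (in_convB E a x) cav -> is_min (in_convB E a x) vex ->
    mcu - mcl <= c * (cav - vex).
Proof.
move=> _ hyp x hc mcu mcl cav vex hmu hml hcav hvex.
have hQ := Q_bound hmu hml.
case: (leP 0 c) => c0.
  have [z1 [z2 [h1 h2 hS]]] := main c0 hyp (leqnn _) hc.
  have := hcav.2 _ h1; have := hvex.2 _ h2 => e1 e2.
  apply: (le_trans hQ); apply: (le_trans hS); apply: ler_wpM2l => //; lra.
have ha : forall e, e \in E -> a e = 0.
  have hG := hyp setT.
  have hp := mu_plus_ge0 E a setT; have hm := mu_minus_le0 E a setT.
  have hle : \sum_(e in gammaE E setT) `|a e| <= 0 by nra.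
  have h0 : \sum_(e in gammaE E setT) `|a e| = 0.
    by apply/eqP; rewrite eq_le hle sumr_ge0.
  move=> e he; apply/eqP; rewrite -normr_eq0; apply/eqP.
  apply: (psumr_eq0P _ h0) => //.
  by rewrite /gammaE !inE he.
have -> : cav = 0 := convB_zero ha hcav.1.
have -> : vex = 0 := convB_zero ha hvex.1.
apply: (le_trans hQ); rewrite subrr mulr0 /SS big1 // => e he; by rewrite ha // normr0 mul0r.
Qed.
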